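(* Consider the model below with $\epsilon_2\ge0$, fix all parameters other than $\epsilon_1$, let $\delta:=(M-1)(1-M_f\beta)+\lambda\sigma N$, and let $\bar{\epsilon}_{BR,RPE}\in[-\infty,\infty)$ be the number such that a BR-RPE exists if and only if $\epsilon_1\ge\bar{\epsilon}_{BR,RPE}$. If $\epsilon_1>\bar{\epsilon}_{BR,RPE}$, then: (i) there is exactly one E-stable BR-RPE; (ii) if $\delta\ge0$, the E-stable BR-RPE is of type PP or of type ZP; (iii) if $\delta<0$, the E-stable BR-RPE is the unique BR-RPE.
   Context: Parameters: $0<\beta<1$, $\sigma,\lambda,\mu>0$, $\psi>1$, $M,M_f,N\in(0,1]$ with $\min\{M,M_f,N\}<1$, $p,q\in(0,1]$ with $(p,q)\neq(1,1)$. The shock $\epsilon_t$ is a two-state Markov chain on $\{\epsilon_1,\epsilon_2\}$ with $\Pr(\epsilon_{t+1}=\epsilon_1\mid\epsilon_t=\epsilon_1)=p$, $\Pr(\epsilon_{t+1}=\epsilon_2\mid\epsilon_t=\epsilon_2)=q$; $\bar q:=(1-p)/(2-p-q)$. Model: $x_t=M\hat E_t x_{t+1}-\sigma(i_t-N\hat E_t\pi_{t+1})+\epsilon_t$, $\pi_t=\lambda x_t+M_f\beta\hat E_t\pi_{t+1}$, $i_t=\max\{\psi\pi_t,-\mu\}$. A BR-RPE is a pair $Y_j=(x_j,\pi_j)$, $j=1,2$, such that with $(\bar x,\bar\pi):=\bar qY_2+(1-\bar q)Y_1$ and $i_j=\max\{\psi\pi_j,-\mu\}$: $x_j=M\bar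 x-\sigma(i_j-N\bar\pi)+\epsilon_j$ and $\pi_j=\lambda x_j+M_f\beta\bar\pi$, $j=1,2$. Types: the ZLB binds in state $j$ if $\psi\pi_j\le-\mu$; type PP (no state), ZP (state 1 only), PZ (state 2 only), ZZ (both). Let $\hat A_P=\frac{1}{1+\lambda\sigma\psi}\begin{pmatrix}M&N\sigma-M_f\beta\sigma\psi\\ M\lambda&M_f\beta+N\lambda\sigma\end{pmatrix}$, $\hat A_Z=\begin{pmatrix}M&N\sigma\\ M\lambda&M_f\beta+N\lambda\sigma\end{pmatrix}$, $I$ the $2\times2$ identity, $DT^{PP}=\hat A_P-I$, $DT^{ZP}=\bar q\hat A_P+(1-\bar q)\hat A_Z-I$, $DT^{PZ}=(1-\bar q)\hat A_P+\bar q\hat A_Z-I$, $DT^{ZZ}=\hat A_Z-I$. A BR-RPE of type $i$ is E-stable if all eigenvalues of $DT^i$ have negative real parts. *)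

(* Defs.v *)
From HB Require Import structures.
From mathcomp Require Import all_boot all_order all_algebra.
From mathcomp Require Import complex.
From mathcomp Require Import constructive_ereal.
Set Implicit Arguments. Unset Strict Implicit. Unset Printing Implicit Defensive.
Import Order.TTheory GRing.Theory Num.Theory.
Local Open Scope ring_scope.

Section Model.
Variable R : rcfType.

Record params := Params {
  beta : R; sigma : R; lambda : R; mu : R; psi : R;
  M : R; Mf : R; N : R; p : R; q : R }.

Definition params_ok (P : params) : Prop :=
  (0 < beta P < 1) /\ 0 < sigma P /\ 0 < lambda P /\ 0 < mu P /\ 1 < psi P /\
  (0 < M P <= 1) /\ (0 < Mf P <= 1) /\ (0 < N P <= 1) /\
  Num.min (M P) (Num.min (Mf P) (N P)) < 1 /\
  (0 < p P <= 1) /\ (0 < q P <= 1) /\ (p P, q P) <> (1, 1).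

Definition qbar (P : params) : R := (1 - p P) / (2 - p P - q P).

Definition irate (P : params) (pi : R) : R := Num.max (psi P * pi) (- mu P).

(* Y = (x, pi).  A BR-RPE is a pair (Y1, Y2) solving the stated equations. *)
Definition BR_RPE (P : params) (eps1 eps2 : R) (Y1 Y2 : R * R) : Prop :=
  let qb := qbar P in
  let xbar := qb * Y2.1 + (1 - qb) * Y1.1 in
  let pibar := qb * Y2.2 + (1 - qb) * Y1.2 in
  [/\ Y1.1 = M P * xbar - sigma P * (irate P Y1.2 - N P * pibar) + eps1,
      Y1.2 = lambda P * Y1.1 + Mf P * beta P * pibar,
      Y2.1 = M P * xbar - sigma P * (irate P Y2.2 - N P * pibar) + eps2 &
      Y2.2 = lambda P * Y2.1 + Mf P * beta P * pibar].

Definition zlb_binds (P : params) (pi : R) : bool := psi P * pi <= - mu P.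

Inductive rpe_type := PP | ZP | PZ | ZZ.

Definition type_of (P : params) (Y1 Y2 : R * R) : rpe_type :=
  match zlb_binds P Y1.2, zlb_binds P Y2.2 with
  | false, false => PP
  | true, false => ZP
  | false, true => PZ
  | true, true => ZZ
  end.

Definition mx2 (a b c d : R) : 'M[R]_2 :=
  \matrix_(i < 2, j < 2)
    if i == 0 :> nat then (if j == 0 :> nat then a else b)
    else (if j == 0 :> nat then c else d).

Definition A_P (P : params) : 'M[R]_2 :=
  (1 + lambda P * sigma P * psi P)^-1 *:
  mx2 (M P) (N P * sigma P - Mf P * beta P * sigma P * psi P)
      (M P * lambda P) (Mf P * beta P + N P * lambda P * sigma P).

Definition A_Z (P : params) : 'M[R]_2 :=
  mx2 (M P) (N P * sigma P)
      (M P * lambda P) (Mf P * beta P + N P * lambda P * sigma P).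

Definition DT (P : params) (t : rpe_type) : 'M[R]_2 :=
  let qb := qbar P in
  match t with
  | PP => A_P P - 1%:M
  | ZP => qb *: A_P P + (1 - qb) *: A_Z P - 1%:M
  | PZ => (1 - qb) *: A_P P + qb *: A_Z P - 1%:M
  | ZZ => A_Z P - 1%:M
  end.

Definition all_eig_neg_re (A : 'M[R]_2) : Prop :=
  forall z : R[i], root (char_poly (map_mx (real_complex R) A)) z ->
    complex.Re z < 0.

Definition Estable_BR_RPE (P : params) (eps1 eps2 : R) (Y1 Y2 : R * R) : Prop :=
  BR_RPE P eps1 eps2 Y1 Y2 /\ all_eig_neg_re (DT P (type_of P Y1 Y2)).

Definition delta (P : params) : R :=
  (M P - 1) * (1 - Mf P * beta P) + lambda P * sigma P * N P.

End Model.

(* Main.v *)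
Require Import Defs.
From HB Require Import structures.
From mathcomp Require Import all_boot all_order all_algebra.
From mathcomp Require Import complex.
From mathcomp Require Import constructive_ereal.
From mathcomp Require Import ring lra.
Set Implicit Arguments. Unset Strict Implicit. Unset Printing Implicit Defensive.
Import Order.TTheory GRing.Theory Num.Theory.
Local Open Scope ring_scope.

Ltac destr_ok H :=
  case: H => /andP[b0 b1] [s0 [l0 [m0 [ps [/andP[M0 M1] [/andP[F0 F1]
    [/andP[N0 N1] [_ [/andP[p0 p1] [/andP[q0 q1] pq]]]]]]]]]].

Definition cc (R : rcfType) (P : params R) := 1 + lambda P * sigma P * psi P.
Definition kk (R : rcfType) (P : params R) := 1 + delta P.
Definition zz (R : rcfType) (P : params R) e Pi := kk P * Pi + lambda P * e.
Definition ff (R : rcfType) (P : params R) (b : bool) z :=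
  if b then z + lambda P * sigma P * mu P else z / cc P.
Definition bit (R : rcfType) (P : params R) z := zlb_binds P (z + lambda P * sigma P * mu P).
Definition GG (R : rcfType) (P : params R) z := ff P (bit P z) z.
Definition ww (R : rcfType) (P : params R) (b : bool) := if b then 1 else (cc P)^-1.
Definition LL (R : rcfType) (P : params R) e1 e2 b1 b2 Pi :=
  qbar P * ff P b2 (zz P e2 Pi) + (1 - qbar P) * ff P b1 (zz P e1 Pi) - Pi.
Definition ss (R : rcfType) (P : params R) b1 b2 :=
  kk P * (qbar P * ww P b2 + (1 - qbar P) * ww P b1) - 1.
Definition phi (R : rcfType) (P : params R) e1 e2 Pi :=
  LL P e1 e2 (bit P (zz P e1 Pi)) (bit P (zz P e2 Pi)) Pi.
Definition tyb (b1 b2 : bool) :=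
  match b1, b2 with false, false => PP | true, false => ZP
  | false, true => PZ | true, true => ZZ end.
Definition Yof (R : rcfType) (P : params R) e Pi :=
  ((GG P (zz P e Pi) - Mf P * beta P * Pi) / lambda P, GG P (zz P e Pi)).

Lemma cc_gt1 (R : rcfType) (P : params R) : params_ok P -> 1 < cc P.
Proof. move=> H; destr_ok H; rewrite /cc.
have : 0 < lambda P * sigma P * psi P by rewrite !mulr_gt0 //; lra.
lra. Qed.

Lemma kk_gt0 (R : rcfType) (P : params R) : params_ok P -> 0 < kk P.
Proof. move=> H; destr_ok H; rewrite /kk /delta.
have h1 : 0 < lambda P * sigma P * N P by rewrite !mulr_gt0.
have h2 : 0 < Mf P * beta P by rewrite mulr_gt0.
have h3 : Mf P * beta P < 1 by nra.
nra. Qed.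

Lemma qbar_01 (R : rcfType) (P : params R) : params_ok P -> 0 <= qbar P <= 1.
Proof. move=> H; destr_ok H; rewrite /qbar.
have hd : 0 < 2 - p P - q P.
  case: (ltP (p P) 1) => hp; first lra.
  case: (ltP (q P) 1) => hq; first lra.
  exfalso; apply: pq; congr pair; apply/eqP; rewrite eq_le; apply/andP; split => //.
apply/andP; split; first by apply: divr_ge0; lra.
by rewrite ler_pdivrMr // mul1r; lra.
Qed.

Lemma LL_affine (R : rcfType) (P : params R) e1 e2 b1 b2 Pi Pi' :
  params_ok P ->
  LL P e1 e2 b1 b2 Pi' = LL P e1 e2 b1 b2 Pi + ss P b1 b2 * (Pi' - Pi).
Proof.
move=> H; have hc := cc_gt1 H; have hc0 : cc P != 0 by rewrite gt_eqF //; lra.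
by case: b1; case: b2; rewrite /LL /ff /zz /ss /ww; field.
Qed.

Lemma zlb_ff (R : rcfType) (P : params R) b z : params_ok P ->
  zlb_binds P (ff P b z) = bit P z.
Proof.
move=> H; have hc := cc_gt1 H; destr_ok H.
case: b => //; rewrite /bit /zlb_binds /ff.
rewrite mulrA ler_pdivrMr; last lra.
apply/idP/idP => h; rewrite /cc in h *; nra.
Qed.

Lemma ff_min (R : rcfType) (P : params R) b z : params_ok P ->
  ff P (bit P z) z <= ff P b z.
Proof.
move=> H; have hc := cc_gt1 H; destr_ok H.
have hl : 0 < lambda P * sigma P by rewrite mulr_gt0.
rewrite /ff /bit /zlb_binds; case: b; case: ifP => h //.
- rewrite ler_pdivrMr; last lra.
  rewrite /cc; move/negbT: h; rewrite -ltNge => h; nra.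
- rewrite ler_pdivlMr; last lra.
  rewrite /cc; nra.
Qed.

Lemma ff_lt (R : rcfType) (P : params R) b z z' : params_ok P -> z < z' ->
  ff P b z < ff P b z'.
Proof.
move=> H hz; have hc := cc_gt1 H; rewrite /ff; case: b; first lra.
by rewrite ltr_pM2r // invr_gt0; lra.
Qed.

Lemma GG_lt (R : rcfType) (P : params R) z z' : params_ok P -> z < z' ->
  GG P z < GG P z'.
Proof.
move=> H hz; rewrite /GG.
exact: (le_lt_trans (ff_min (bit P z') z H) (ff_lt _ H hz)).
Qed.

Lemma GG_le (R : rcfType) (P : params R) z z' : params_ok P -> z <= z' ->
  GG P z <= GG P z'.
Proof.
move=> H; rewrite le_eqVlt => /orP [/eqP -> //|hz].
exact/ltW/GG_lt.
Qed.

Lemma irate_GG (R : rcfType) (P : params R) z : params_ok P ->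
  GG P z + lambda P * sigma P * irate P (GG P z) = z.
Proof.
move=> H; have hz := zlb_ff (bit P z) z H.
have hc := cc_gt1 H; have hc0 : cc P != 0 by rewrite gt_eqF //; lra.
rewrite /irate maxEle.
move: hz; rewrite /GG /zlb_binds.
case: (bit P z) => /= ->.
  by ring.
rewrite /ff /cc in hc0 *; field; done.
Qed.

Lemma from_h (R : rcfType) (P : params R) pi z : params_ok P ->
  pi + lambda P * sigma P * irate P pi = z -> pi = GG P z.
Proof.
move=> H; have hc := cc_gt1 H; have hc0 : cc P != 0 by rewrite gt_eqF //; lra.
rewrite /irate maxEle; case: ifP => hb hz.
- have hb' : bit P z = true.
    rewrite /bit /zlb_binds.
    have -> : z + lambda P * sigma P * mu P = pi by rewrite -hz; ring.
    by rewrite hb.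
  rewrite /GG hb' /ff -hz; ring.
- have hp : pi = z / cc P.
    rewrite -hz /cc; field; rewrite /cc in hc0; done.
  have hb' : bit P z = false.
    by rewrite -(zlb_ff false z H) /ff -hp /zlb_binds hb.
  by rewrite /GG hb' /ff.
Qed.

Lemma forward (R : rcfType) (P : params R) e1 e2 Y1 Y2 : params_ok P ->
  BR_RPE P e1 e2 Y1 Y2 ->
  exists Pi, [/\ Y1 = Yof P e1 Pi, Y2 = Yof P e2 Pi & phi P e1 e2 Pi = 0].
Proof.
move=> H; have hl : lambda P != 0 by destr_ok H; rewrite gt_eqF.
case: Y1 Y2 => [x1 p1] [x2 p2]; rewrite /BR_RPE /=.
set Pi := qbar P * p2 + (1 - qbar P) * p1.
set X := qbar P * x2 + (1 - qbar P) * x1.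
case=> E1 E2 E3 E4.
have hX : lambda P * X - (1 - Mf P * beta P) * Pi = 0.
  have -> : lambda P * X - (1 - Mf P * beta P) * Pi =
    qbar P * (lambda P * x2 + Mf P * beta P * Pi - p2) +
    (1 - qbar P) * (lambda P * x1 + Mf P * beta P * Pi - p1) by rewrite /X /Pi; ring.
  by rewrite -E2 -E4 !subrr !mulr0 addr0.
have h1 : p1 + lambda P * sigma P * irate P p1 = zz P e1 Pi.
  apply/eqP; rewrite -subr_eq0.
  have -> : p1 + lambda P * sigma P * irate P p1 - zz P e1 Pi =
    (p1 - (lambda P * x1 + Mf P * beta P * Pi)) +
    lambda P * (x1 - (M P * X - sigma P * (irate P p1 - N P * Pi) + e1)) +
    M P * (lambda P * X - (1 - Mf P * beta P) * Pi).
    by rewrite /zz /kk /delta; ring.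
  by rewrite hX -E2 -E1 !subrr; apply/eqP; ring.
have h2 : p2 + lambda P * sigma P * irate P p2 = zz P e2 Pi.
  apply/eqP; rewrite -subr_eq0.
  have -> : p2 + lambda P * sigma P * irate P p2 - zz P e2 Pi =
    (p2 - (lambda P * x2 + Mf P * beta P * Pi)) +
    lambda P * (x2 - (M P * X - sigma P * (irate P p2 - N P * Pi) + e2)) +
    M P * (lambda P * X - (1 - Mf P * beta P) * Pi).
    by rewrite /zz /kk /delta; ring.
  by rewrite hX -E4 -E3 !subrr; apply/eqP; ring.
have g1 := from_h H h1; have g2 := from_h H h2.
exists Pi; split.
- rewrite /Yof -g1; congr pair; rewrite E2; field; done.
- rewrite /Yof -g2; congr pair; rewrite E4; field; done.
- rewrite /phi /LL -/(GG P _) -/(GG P _) -g1 -g2 /Pi; ring.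
Qed.

Lemma backward (R : rcfType) (P : params R) e1 e2 Pi : params_ok P ->
  phi P e1 e2 Pi = 0 -> BR_RPE P e1 e2 (Yof P e1 Pi) (Yof P e2 Pi).
Proof.
move=> H hphi.
have hl : lambda P != 0 by destr_ok H; rewrite gt_eqF.
have hs : sigma P != 0 by destr_ok H; rewrite gt_eqF.

have hi1 : irate P (GG P (zz P e1 Pi)) = (zz P e1 Pi - GG P (zz P e1 Pi)) / (lambda P * sigma P).
  rewrite -{2}(irate_GG (zz P e1 Pi) H). field; by rewrite hl hs.
have hi2 : irate P (GG P (zz P e2 Pi)) = (zz P e2 Pi - GG P (zz P e2 Pi)) / (lambda P * sigma P).
  rewrite -{2}(irate_GG (zz P e2 Pi) H). field; by rewrite hl hs.
rewrite /BR_RPE /Yof /=.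
rewrite hi1 hi2.
move: hphi; rewrite /phi /LL -/(GG P _) -/(GG P _).
set g1 := GG P (zz P e1 Pi); set g2 := GG P (zz P e2 Pi) => hphi.
have hpb : qbar P * g2 + (1 - qbar P) * g1 = Pi.
  by apply/eqP; rewrite -subr_eq0 hphi.
have hxb : qbar P * ((g2 - Mf P * beta P * Pi) / lambda P) +
    (1 - qbar P) * ((g1 - Mf P * beta P * Pi) / lambda P) =
    (Pi - Mf P * beta P * Pi) / lambda P.
  apply/eqP; rewrite -subr_eq0.
  have -> : qbar P * ((g2 - Mf P * beta P * Pi) / lambda P) +
    (1 - qbar P) * ((g1 - Mf P * beta P * Pi) / lambda P) -
    (Pi - Mf P * beta P * Pi) / lambda P =
    (qbar P * g2 + (1 - qbar P) * g1 - Pi) / lambda P by field.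
  by rewrite hpb subrr mul0r.
rewrite hpb hxb /zz /kk /delta.
split; (field; rewrite ?hl ?hs //).
Qed.

Lemma type_Yof (R : rcfType) (P : params R) e1 e2 Pi : params_ok P ->
  type_of P (Yof P e1 Pi) (Yof P e2 Pi) = tyb (bit P (zz P e1 Pi)) (bit P (zz P e2 Pi)).
Proof.
move=> H; rewrite /type_of /Yof /= /GG !zlb_ff //;
by case: (bit P (zz P e1 Pi)); case: (bit P (zz P e2 Pi)).
Qed.

Lemma char_poly2 (T : comNzRingType) (B : 'M[T]_2) :
  char_poly B = 'X^2 - (B 0 0 + B 1 1)%:P * 'X + (B 0 0 * B 1 1 - B 0 1 * B 1 0)%:P.
Proof.
rewrite /char_poly (expand_det_row _ 0) !big_ord_recl big_ord0 /= addr0.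
rewrite /cofactor !det_mx11 !mxE /=.
have l0 : lift (0 : 'I_2) (0 : 'I_1) = 1 by apply/val_inj.
have l2 : lift (1 : 'I_2) (0 : 'I_1) = 0 by apply/val_inj.
rewrite l0 /= l2 mulr1n mulr0n polyCB polyCM polyCM polyCD expr0 expr1 mul1r.
have -> : (ord0 : 'I_2) = 0 by [].
ring.
Qed.

Lemma eig_b (R : rcfType) (A : 'M[R]_2) : A 0 0 + A 1 1 < 0 -> A 0 0 * A 1 1 - A 0 1 * A 1 0 > 0 ->
  all_eig_neg_re A.
Proof.
move=> ht hd z; rewrite char_poly2 !mxE /root !hornerE.
case: z => a b /eqP H.
have H1 := congr1 (@complex.Re R) H.
have H2 := congr1 (@complex.Im R) H.
simpl in H1, H2.
rewrite /= ltNge; apply/negP => ha.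
set t := A 0 0 + A 1 1 in ht H1 H2.
set d := A 0 0 * A 1 1 - A 0 1 * A 1 0 in hd.
have hb : b * (2 * a - t) = 0 by rewrite -H2; ring.
have hne : 2 * a - t != 0 by rewrite gt_eqF // ; lra.
move: hb => /eqP; rewrite mulf_eq0 (negbTE hne) orbF => /eqP hb.
rewrite hb in H1.
have : a * a - t * a + d = 0 by rewrite -H1 /d; ring.
nra.
Qed.

Lemma eig_a (R : rcfType) (A : 'M[R]_2) : all_eig_neg_re A -> A 0 0 * A 1 1 - A 0 1 * A 1 0 > 0.
Proof.
move=> H; rewrite ltNge; apply/negP => hd.
set t := A 0 0 + A 1 1.
set d := A 0 0 * A 1 1 - A 0 1 * A 1 0 in hd.
have hD : 0 <= t ^+ 2 - 4 * d by nra.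
set s := Num.sqrt (t ^+ 2 - 4 * d).
have hs : s ^+ 2 = t ^+ 2 - 4 * d by rewrite sqr_sqrtr.
have hs0 : 0 <= s by apply: sqrtr_ge0.
have ha : 0 <= (t + s) / 2.
  have : 0 <= t + s.
    rewrite leNgt; apply/negP => hlt.
    have h1 : s * s < t * t by nra.
    move: hs; rewrite !expr2 => hs'. nra.
  lra.
have := H (((t + s) / 2)%:C)%C.
rewrite /root char_poly2 !mxE !hornerE.
set w := (X in X == 0).
have -> : w = 0.
  apply/eqP; rewrite eq_complex /=; apply/andP; split; apply/eqP; last by ring.
  rewrite -/t. have : s * s = t ^+ 2 - 4 * d by rewrite -hs expr2.
  rewrite /d => hss. nra.
rewrite eqxx => /(_ isT) /=. lra.
Qed.

Lemma DT_tr_det (R : rcfType) (P : params R) b1 b2 : params_ok P ->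
  let A := DT P (tyb b1 b2) in
  let w := qbar P * ww P b2 + (1 - qbar P) * ww P b1 in
  A 0 0 + A 1 1 = w * (M P + Mf P * beta P + N P * lambda P * sigma P) - 2 /\
  A 0 0 * A 1 1 - A 0 1 * A 1 0 = 1 - w * kk P.
Proof.
move=> H; have hc := cc_gt1 H; have hc0 : cc P != 0 by rewrite gt_eqF //; lra.
case: b1; case: b2; rewrite /= /DT /A_P /A_Z /mx2 !mxE /=.
all: rewrite /cc /kk /delta in hc0 *; split; field; done.
Qed.

Lemma ww_bounds (R : rcfType) (P : params R) b : params_ok P ->
  0 < (cc P)^-1 <= ww P b /\ ww P b <= 1.
Proof.
move=> H; have hc := cc_gt1 H.
have h1 : 0 < (cc P)^-1 by rewrite invr_gt0; lra.
have h2 : (cc P)^-1 <= 1 by rewrite invf_le1; lra.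
by case: b; rewrite /ww; split => //; apply/andP; split.
Qed.

Lemma w_bounds (R : rcfType) (P : params R) b1 b2 : params_ok P ->
  0 < qbar P * ww P b2 + (1 - qbar P) * ww P b1 <= 1.
Proof.
move=> H; have /andP[q0 q1] := qbar_01 H.
have [/andP[c0 c1] c2] := ww_bounds b1 H.
have [/andP[d0 d1] d2] := ww_bounds b2 H.
apply/andP; split; nra.
Qed.

Lemma stab_iff (R : rcfType) (P : params R) u1 u2 : params_ok P ->
  all_eig_neg_re (DT P (tyb u1 u2)) <-> ss P u1 u2 < 0.
Proof.
move=> H; have [htr hdet] := DT_tr_det u1 u2 H.
have /andP[w0 w1] := w_bounds u1 u2 H.
move: htr hdet; set w := qbar P * ww P u2 + (1 - qbar P) * ww P u1 => htr hdet.
rewrite /ss -/w; split.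
- by move=> /eig_a; rewrite hdet; lra.
- move=> hs; apply: eig_b; last by rewrite hdet; lra.
  rewrite htr.
  have hk : kk P = M P + Mf P * beta P + N P * lambda P * sigma P - M P * (Mf P * beta P).
    by rewrite /kk /delta; ring.
  destr_ok H.
  have hmf : Mf P * beta P < 1 by nra.
  have hmf0 : 0 < Mf P * beta P by rewrite mulr_gt0.
  have hm : M P * (Mf P * beta P) < 1 by nra.
  have hm0 : 0 < M P * (Mf P * beta P) by rewrite mulr_gt0.
  have hwm : w * (M P * (Mf P * beta P)) < 1.
    by apply: (le_lt_trans _ hm); rewrite ler_piMl // ltW.
  have : w * kk P < 1 by lra.
  rewrite hk; nra.
Qed.

Lemma LL_min (R : rcfType) (P : params R) e1 e2 b1 b2 Pi : params_ok P ->
  phi P e1 e2 Pi <= LL P e1 e2 b1 b2 Pi.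
Proof.
move=> H; have /andP[q0 q1] := qbar_01 H.
rewrite /phi /LL lerD2r; apply: lerD.
  by apply: ler_wpM2l => //; apply: ff_min.
by apply: ler_wpM2l; [lra | apply: ff_min].
Qed.

Lemma ss_le_delta (R : rcfType) (P : params R) b1 b2 : params_ok P ->
  ss P b1 b2 <= delta P.
Proof.
move=> H; have /andP[w0 w1] := w_bounds b1 b2 H; have hk := kk_gt0 H.
rewrite /ss; move: hk; rewrite /kk => hk; nra.
Qed.

Lemma ss_ff (R : rcfType) (P : params R) : params_ok P -> ss P false false < 0.
Proof.
move=> H; have hc := cc_gt1 H.
rewrite /ss /ww.
have -> : kk P * (qbar P * (cc P)^-1 + (1 - qbar P) * (cc P)^-1) - 1 =
          (kk P - cc P) / cc P.
  by field; rewrite gt_eqF //; lra.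
rewrite pmulr_llt0 ?invr_gt0; last lra.
rewrite /kk /cc /delta; destr_ok H.
have h1 : 0 <= (1 - M P) * (1 - Mf P * beta P) by apply: mulr_ge0; nra.
have h2 : lambda P * sigma P * N P < lambda P * sigma P * psi P.
  by rewrite ltr_pM2l ?mulr_gt0 //; lra.
nra.
Qed.

Lemma stable_root_le (R : rcfType) (P : params R) e1 e2 Pa Pb : params_ok P ->
  phi P e1 e2 Pa = 0 -> ss P (bit P (zz P e1 Pa)) (bit P (zz P e2 Pa)) < 0 ->
  phi P e1 e2 Pb = 0 -> Pb <= Pa.
Proof.
move=> H ha hs hb; rewrite leNgt; apply/negP => hab.
have := LL_min e1 e2 (bit P (zz P e1 Pa)) (bit P (zz P e2 Pa)) Pb H.
rewrite hb (LL_affine _ _ _ _ Pa Pb H).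
rewrite -/(phi P e1 e2 Pa) ha add0r.
have : 0 < Pb - Pa by lra.
nra.
Qed.

Lemma exists_stable (R : rcfType) (P : params R) e1 e2 P0 : params_ok P ->
  0 < phi P e1 e2 P0 ->
  exists Pi, phi P e1 e2 Pi = 0 /\ ss P (bit P (zz P e1 Pi)) (bit P (zz P e2 Pi)) < 0.
Proof.
move=> H h0.
have hL0 : forall b1 b2, 0 < LL P e1 e2 b1 b2 P0.
  by move=> b1 b2; apply: (lt_le_trans h0); apply: LL_min.
pose cand b1 b2 := if ss P b1 b2 < 0 then P0 - LL P e1 e2 b1 b2 P0 / ss P b1 b2
  else P0 - LL P e1 e2 false false P0 / ss P false false.
have root_spec : forall b1 b2, ss P b1 b2 < 0 ->
    P0 < P0 - LL P e1 e2 b1 b2 P0 / ss P b1 b2 /\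
    LL P e1 e2 b1 b2 (P0 - LL P e1 e2 b1 b2 P0 / ss P b1 b2) = 0.
  move=> b1 b2 hs; have hL := hL0 b1 b2; split.
    have : LL P e1 e2 b1 b2 P0 / ss P b1 b2 < 0 by rewrite pmulr_rlt0 // invr_lt0.
    lra.
  rewrite (LL_affine _ _ _ _ P0 _ H); field; by rewrite lt_eqF.
have hff := ss_ff H.
have cand_spec : forall b1 b2, P0 < cand b1 b2 /\
    exists c1 c2, LL P e1 e2 c1 c2 (cand b1 b2) = 0.
  move=> b1 b2; rewrite /cand; case: ifP => hs.
    by have [h1 h2] := root_spec b1 b2 hs; split => //; exists b1, b2.
  by have [h1 h2] := root_spec false false hff; split => //; exists false, false.
pose Ps := Num.min (Num.min (cand true true) (cand true false))
                   (Num.min (cand false true) (cand false false)).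
have hPs : exists b1 b2, Ps = cand b1 b2.
  rewrite /Ps !minEle.
  case: ifP => _; case: ifP => _; try case: ifP => _; by do 2 eexists.
have hPsle : forall b1 b2, Ps <= cand b1 b2.
  move=> b1 b2; rewrite /Ps.
  by case: b1; case: b2; rewrite !ge_min ?lexx ?orbT.
have hPs0 : P0 < Ps.
  have [b1 [b2 ->]] := hPs; exact: (cand_spec b1 b2).1.
have hpos : forall b1 b2, 0 <= LL P e1 e2 b1 b2 Ps /\
    (0 <= ss P b1 b2 -> 0 < LL P e1 e2 b1 b2 Ps).
  move=> b1 b2; rewrite (LL_affine _ _ _ _ P0 _ H); have hL := hL0 b1 b2.
  case: (ltP (ss P b1 b2) 0) => hs.
  - split; last by move=> h; exfalso; lra.
    have [h1 h2] := root_spec b1 b2 hs.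
    move: h2; rewrite (LL_affine _ _ _ _ P0 _ H) => h2.
    have := hPsle b1 b2; rewrite /cand hs => hle.
    nra.
  - have : 0 <= ss P b1 b2 * (Ps - P0) by apply: mulr_ge0 => //; lra.
    move=> h; split => [|_]; lra.
exists Ps.
have hphi : phi P e1 e2 Ps = 0.
  apply/eqP; rewrite eq_le; apply/andP; split.
    have [b1 [b2 hb]] := hPs.
    have [_ [c1 [c2 hc]]] := cand_spec b1 b2.
    by rewrite -hc -hb; apply: LL_min.
  exact: (hpos _ _).1.
split => //.
rewrite ltNge; apply/negP => hs.
have := (hpos _ _).2 hs; rewrite -/(phi P e1 e2 Ps) hphi; lra.
Qed.

Lemma no_PZ (R : rcfType) (P : params R) e1 e2 Pi : params_ok P -> 0 <= e2 ->
  0 <= delta P -> phi P e1 e2 Pi = 0 -> bit P (zz P e2 Pi) = true ->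
  ss P (bit P (zz P e1 Pi)) true < 0 -> False.
Proof.
move=> H he2 hd hphi hb2 hs.
have hc := cc_gt1 H; have hk := kk_gt0 H; have /andP[hq0 hq1] := qbar_01 H.
have hsd : ss P true true = delta P by rewrite /ss /ww /kk; ring.
case hb1 : (bit P (zz P e1 Pi)) hs => hs.
  by rewrite hsd in hs; lra.
have hz1 := zlb_ff false (zz P e1 Pi) H; rewrite hb1 in hz1.
have hz2 := zlb_ff true (zz P e2 Pi) H; rewrite hb2 in hz2.
set z1 := zz P e1 Pi in hz1 hb1 hphi hs.
set z2 := zz P e2 Pi in hz2 hb2 hphi.
have hpi : z1 / cc P > z2 + lambda P * sigma P * mu P.
  move: hz1 hz2; rewrite /zlb_binds /ff => /negbT; rewrite -ltNge => h1 h2.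
  have hps : 0 < psi P by destr_ok H; lra.
  have : psi P * (z2 + lambda P * sigma P * mu P) < psi P * (z1 / cc P) by lra.
  by rewrite ltr_pM2l.
have hqb : qbar P < 1.
  rewrite lt_neqAle hq1 andbT; apply/negP => /eqP hq.
  move: hs; rewrite /ss /ww hq; have -> : kk P * (1 * 1 + (1 - 1) * (cc P)^-1) - 1 = delta P.
    by rewrite /kk; ring.
  lra.
move: hphi; rewrite /phi /LL hb1 hb2 -/z1 -/z2 /ff => hphi.
set E := (X in X = 0) in hphi.
have hPi : Pi - (z2 + lambda P * sigma P * mu P) =
    (1 - qbar P) * (z1 / cc P - (z2 + lambda P * sigma P * mu P)).
  transitivity (Pi - (z2 + lambda P * sigma P * mu P) + E); first by rewrite hphi addr0.
  rewrite /E; ring.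
have hpos : 0 < Pi - (z2 + lambda P * sigma P * mu P).
  by rewrite hPi; apply: mulr_gt0; lra.
have hl : 0 < lambda P by destr_ok H.
have hsm : 0 < lambda P * sigma P * mu P by destr_ok H; rewrite !mulr_gt0.
have hz2' : z2 = kk P * Pi + lambda P * e2 by [].
have hle2 : 0 <= lambda P * e2 by apply: mulr_ge0 => //; lra.
have hdPi : - delta P * Pi > lambda P * sigma P * mu P.
  move: hpos; rewrite hz2' /kk; lra.
have hPi0 : Pi < 0.
  rewrite ltNge; apply/negP => h.
  have : 0 <= delta P * Pi by apply: mulr_ge0.
  lra.
have hz1' : z1 = kk P * Pi + lambda P * e1 by [].
have hroot : - ss P false true * Pi =
    qbar P * (lambda P * e2 + lambda P * sigma P * mu P) +
    (1 - qbar P) * (lambda P * e1) / cc P.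
  transitivity (- ss P false true * Pi + E); first by rewrite hphi addr0.
  rewrite /E hz1' hz2' /ss /ww.
  by field; rewrite gt_eqF //; lra.
have hneg : - ss P false true * Pi < 0.
  by rewrite pmulr_rlt0 //; lra.
have h2 : 0 <= qbar P * (lambda P * e2 + lambda P * sigma P * mu P).
  by apply: mulr_ge0 => //; lra.
have he1 : (1 - qbar P) * (lambda P * e1) / cc P < 0 by lra.
have he1' : e1 < 0.
  move: he1; rewrite -mulrA pmulr_rlt0; last lra.
  rewrite pmulr_llt0 ?invr_gt0; last lra.
  by rewrite pmulr_rlt0.
have hG1 : GG P z1 = z1 / cc P by rewrite /GG hb1.
have hG2 : GG P z2 = z2 + lambda P * sigma P * mu P by rewrite /GG hb2.
have hzz : z2 < z1.
  rewrite ltNge; apply/negP => h.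
  have := GG_le H h; rewrite hG1 hG2; lra.
move: hzz; rewrite hz1' hz2' ltrD2l ltr_pM2l // => h.
lra.
Qed.

Lemma phiE (R : rcfType) (P : params R) e1 e2 Pi :
  phi P e1 e2 Pi = qbar P * GG P (zz P e2 Pi) + (1 - qbar P) * GG P (zz P e1 Pi) - Pi.
Proof. by []. Qed.

Lemma estable_inv (R : rcfType) (P : params R) e1 e2 Y1 Y2 : params_ok P ->
  Estable_BR_RPE P e1 e2 Y1 Y2 ->
  exists Pi, [/\ Y1 = Yof P e1 Pi, Y2 = Yof P e2 Pi, phi P e1 e2 Pi = 0 &
    ss P (bit P (zz P e1 Pi)) (bit P (zz P e2 Pi)) < 0].
Proof.
move=> H [hbr hst]; have [Pi [h1 h2 h3]] := forward H hbr.
exists Pi; split => //.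
by move: hst; rewrite h1 h2 type_Yof // stab_iff.
Qed.

Lemma kk_lt_cc (R : rcfType) (P : params R) : params_ok P -> kk P < cc P.
Proof.
move=> H; have := ss_ff H; have hc := cc_gt1 H; rewrite /ss /ww.
have -> : kk P * (qbar P * (cc P)^-1 + (1 - qbar P) * (cc P)^-1) - 1 =
          (kk P - cc P) / cc P.
  by field; rewrite gt_eqF //; lra.
rewrite pmulr_llt0 ?invr_gt0; lra.
Qed.

Lemma pos_point_q1 (R : rcfType) (P : params R) e1 e2 : params_ok P -> 0 <= e2 ->
  qbar P = 1 -> exists P0, 0 < phi P e1 e2 P0.
Proof.
move=> H he2 hq.
have hc := cc_gt1 H; have hkc := kk_lt_cc H.
have hl : 0 < lambda P by destr_ok H.
have hsm : 0 < lambda P * sigma P * mu P by destr_ok H; rewrite !mulr_gt0.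
have hle2 : 0 <= lambda P * e2 by apply: mulr_ge0 => //; lra.
suff [P0 [hP0 hT]] : exists P0, P0 < 0 /\ P0 < zz P e2 P0 + lambda P * sigma P * mu P.
  exists P0; rewrite phiE hq subrr mul0r addr0 mul1r subr_gt0.
  rewrite /GG /ff; case: (bit P (zz P e2 P0)) => //.
  rewrite ltr_pdivlMr; last lra.
  rewrite /zz; nra.
case: (lerP (delta P) 0) => hd.
- exists (-1); split; first lra.
  rewrite /zz /kk; lra.
- exists (- (lambda P * sigma P * mu P) / (2 * delta P)); split.
    by rewrite mulNr oppr_lt0 divr_gt0 //; lra.
  rewrite /zz /kk.
  have -> : (1 + delta P) * (- (lambda P * sigma P * mu P) / (2 * delta P)) =
    - (lambda P * sigma P * mu P) / (2 * delta P) - lambda P * sigma P * mu P / 2.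
    by field; rewrite gt_eqF.
  lra.
Qed.

Unset Implicit Arguments.

Theorem proposition13 (R : rcfType) (P : params R) (eps2 : R)
    (epsbar : \bar R) (eps1 : R) :
  params_ok P -> 0 <= eps2 ->
  epsbar != +oo%E ->
  (forall e : R,
     (exists Y1 Y2, BR_RPE P e eps2 Y1 Y2) <-> (epsbar <= e%:E)%E) ->
  (epsbar < eps1%:E)%E ->
  [/\ (exists Y1 Y2, Estable_BR_RPE P eps1 eps2 Y1 Y2 /\
        forall Z1 Z2, Estable_BR_RPE P eps1 eps2 Z1 Z2 -> Z1 = Y1 /\ Z2 = Y2),
      (0 <= delta P ->
        forall Y1 Y2, Estable_BR_RPE P eps1 eps2 Y1 Y2 ->
          type_of P Y1 Y2 = PP \/ type_of P Y1 Y2 = ZP) &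
      (delta P < 0 ->
        forall Y1 Y2, Estable_BR_RPE P eps1 eps2 Y1 Y2 ->
          forall Z1 Z2, BR_RPE P eps1 eps2 Z1 Z2 -> Z1 = Y1 /\ Z2 = Y2)].
Proof.
move=> H he2 hinf hiff hlt.
have /andP[hq0 hq1] := qbar_01 H.
have hl : 0 < lambda P by destr_ok H.
have [P0 hP0] : exists P0, 0 < phi P eps1 eps2 P0.
  case: (ltP (qbar P) 1) => hq; last first.
    by apply: pos_point_q1 => //; apply/eqP; rewrite eq_le hq1 hq.
  have [e [he1 he2']] : exists e, (epsbar <= e%:E)%E /\ e < eps1.
    clear hiff; move: hinf hlt; case: epsbar => [r| |] // _.
    - rewrite lte_fin => hr; exists ((r + eps1) / 2); rewrite lee_fin; split; lra.
    - by move=> _; exists (eps1 - 1); split; [rewrite leNye | lra].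
  have [Y1 [Y2 hbr]] := (hiff e).2 he1.
  have [Pe [_ _ hpe]] := forward H hbr.
  exists Pe.
  have hG : GG P (zz P e Pe) < GG P (zz P eps1 Pe).
    by apply: GG_lt => //; rewrite /zz ltrD2l ltr_pM2l.
  move: hpe; rewrite !phiE => hpe.
  have : 0 < (1 - qbar P) * (GG P (zz P eps1 Pe) - GG P (zz P e Pe)).
    by apply: mulr_gt0; lra.
  lra.
have [Ps [hPs hss]] := exists_stable H hP0.
have hYs : Estable_BR_RPE P eps1 eps2 (Yof P eps1 Ps) (Yof P eps2 Ps).
  split; first exact: backward.
  by rewrite type_Yof // stab_iff.
split.
- exists (Yof P eps1 Ps), (Yof P eps2 Ps); split => // Z1 Z2 hZ.
  have [Pz [-> -> hz hsz]] := estable_inv H hZ.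
  have e1 := stable_root_le H hPs hss hz.
  have e2 := stable_root_le H hz hsz hPs.
  have -> : Pz = Ps by apply/eqP; rewrite eq_le e1 e2.
  by [].
- move=> hd Y1 Y2 hY.
  have [Pi [-> -> hz hsz]] := estable_inv H hY.
  rewrite type_Yof //.
  case hb2 : (bit P (zz P eps2 Pi)) hsz => hsz.
    by exfalso; apply: (no_PZ H he2 hd hz hb2 hsz).
  by case: (bit P (zz P eps1 Pi)); [right | left].
- move=> hd Y1 Y2 hY Z1 Z2 hZ.
  have [Py [-> -> hy hsy]] := estable_inv H hY.
  have [Pz [-> -> hz]] := forward H hZ.
  have hsz : ss P (bit P (zz P eps1 Pz)) (bit P (zz P eps2 Pz)) < 0.
    by apply: (le_lt_trans (ss_le_delta _ _ H)).
  have e1 := stable_root_le H hy hsy hz.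
  have e2 := stable_root_le H hz hsz hy.
  have -> : Pz = Py by apply/eqP; rewrite eq_le e1 e2.
  by [].
Qed.
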